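(* A convex polyomino is (horizontally) centered if and only if for any pair of its cells there is a path in the polyomino connecting them of the form $S^{h_1}E^{k}S^{h_2}$ or $S^{h_1}W^{k}S^{h_2}$ with integers $h_1,h_2,k\geq 0$ (i.e. $h_1$ south steps, then $k$ east steps or $k$ west steps, then $h_2$ south steps).
   Context: A cell is a unit square of $\mathbb Z\times\mathbb Z$; a polyomino is a finite connected union of cells with no cut point, up to translation. A polyomino is convex if its intersection with every vertical and every horizontal line of cells is connected. The minimal bounding rectangle of a convex polyomino is the smallest lattice rectangle containing it. A convex polyomino is (horizontally) centered if it contains at least one row that touches both the left side and the right side of its minimal bounding rectangle. A path in a polyomino is a self-avoiding sequence of unit steps between adjacent cells of the polyomino, steps being $N=(0,1)$, $S=(0,-1)$, $E=(1,0)$, $W=(-1,0)$; exponents denote repetition of a step. *)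

(* Defs.v *)
(* Cells are pairs (x, y) : int * int, x = column, y = row. *)
From mathcomp Require Import all_boot all_order all_algebra.
Set Implicit Arguments. Unset Strict Implicit. Unset Printing Implicit Defensive.
Import Order.TTheory GRing.Theory Num.Theory.
Local Open Scope ring_scope.

Definition cell := (int * int)%type.

Inductive step := N | S | E | W.

Definition step_vec (s : step) : cell :=
  match s with
  | N => (0, 1) | S => (0, -1) | E => (1, 0) | W => (-1, 0)
  end.

Definition move (c : cell) (s : step) : cell :=
  (c.1 + (step_vec s).1, c.2 + (step_vec s).2).

Fixpoint walk (c : cell) (p : seq step) : seq cell :=
  c :: match p with [::] => [::] | s :: p' => walk (move c s) p' end.

Definition is_path (P : seq cell) (a b : cell) (p : seq step) : Prop :=
  all (fun c => c \in P) (walk a p) /\ uniq (walk a p) /\ last a (walk a p) = b.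

Definition polyomino (P : seq cell) : Prop :=
  P != [::] /\
  forall a b, a \in P -> b \in P -> exists p : seq step,
    all (fun c => c \in P) (walk a p) /\ last a (walk a p) = b.

Definition convex_poly (P : seq cell) : Prop :=
  (forall (y x1 x2 x : int), (x1, y) \in P -> (x2, y) \in P ->
      x1 <= x <= x2 -> (x, y) \in P) /\
  (forall (x y1 y2 y : int), (x, y1) \in P -> (x, y2) \in P ->
      y1 <= y <= y2 -> (x, y) \in P).

Definition centered (P : seq cell) : Prop :=
  exists (y x1 x2 : int), (x1, y) \in P /\ (x2, y) \in P /\
    forall c, c \in P -> x1 <= c.1 <= x2.

Definition SDS_path (P : seq cell) (a b : cell) : Prop :=
  exists (h1 k h2 : nat) (d : step), (d = E \/ d = W) /\
    is_path P a b (nseq h1 S ++ nseq k d ++ nseq h2 S).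

(* Main.v *)
Require Import Defs.
From mathcomp Require Import all_boot all_order all_algebra zify ring.
Import Order.TTheory GRing.Theory Num.Theory.
Local Open Scope ring_scope.

Definition pt (c : cell) (s : step) (i : nat) : cell :=
  (c.1 + i%:Z * (step_vec s).1, c.2 + i%:Z * (step_vec s).2).

Lemma pt_move c s i : pt (move c s) s i = pt c s i.+1.
Proof.
rewrite /pt /move; case: s => /=; congr pair; lia.
Qed.

Lemma pt0 c s : pt c s 0 = c.
Proof. case: c => x y; rewrite /pt; case: s => /=; congr pair; lia. Qed.

Lemma walk_nseq c s n q :
  walk c (nseq n s ++ q) = map (pt c s) (iota 0 n) ++ walk (pt c s n) q.
Proof.
elim: n c => [|n IH] c /=; first by rewrite pt0.
rewrite IH pt_move pt0; congr (_ :: _ ++ _).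
rewrite -[in RHS](addn0 1%N) iotaDl -map_comp; apply: eq_map => i /=.
by rewrite pt_move.
Qed.

Lemma walk_nseq0 c s n :
  walk c (nseq n s) = map (pt c s) (iota 0 n) ++ [:: pt c s n].
Proof. by rewrite -[nseq n s]cats0 walk_nseq. Qed.

Lemma foldl_nseq c s n : foldl move c (nseq n s) = pt c s n.
Proof.
elim: n c => [|n IH] c /=; first by rewrite pt0.
by rewrite IH pt_move.
Qed.

Lemma last_walk x c p : last x (walk c p) = foldl move c p.
Proof.
elim: p x c => [|s p IH] x c //=.
Qed.

Lemma prefix_in_walk a p1 p2 : foldl move a p1 \in walk a (p1 ++ p2).
Proof.
elim: p1 a => [|s p1 IH] a /=.
  by case: p2 => [|s p2] /=; rewrite inE eqxx.
by rewrite inE IH orbT.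
Qed.

Lemma walk_cons c p : walk c p = c :: behead (walk c p).
Proof. by case: p. Qed.

Lemma sorted_walk (r : rel cell) (Q : pred step) c p :
  (forall c s, Q s -> r c (move c s)) -> all Q p -> sorted r (walk c p).
Proof.
move=> H; elim: p c => [|s p IH] c //= /andP[Qs Qp].
rewrite walk_cons /= H //=.
by have := IH (move c s) Qp; rewrite walk_cons.
Qed.

Lemma all_iota (Q : pred nat) n : (forall i, (i <= n)%N -> Q i) -> all Q (iota 0 n).
Proof. move=> H; apply/allP => i; rewrite mem_iota => /andP[_ hi]; apply: H; lia. Qed.

Definition rel_d (d : step) : rel cell := fun u v =>
  (v.2 < u.2) || ((v.2 == u.2) && (u.1 * (step_vec d).1 < v.1 * (step_vec d).1)).

Definition Q_d (d : step) : pred step := fun s =>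
  match s, d with S, _ => true | E, E => true | W, W => true | _, _ => false end.

Lemma build P a h1 k h2 d : (d = E \/ d = W) ->
  (forall i, (i <= h1)%N -> pt a S i \in P) ->
  (forall i, (i <= k)%N -> pt (pt a S h1) d i \in P) ->
  (forall i, (i <= h2)%N -> pt (pt (pt a S h1) d k) S i \in P) ->
  SDS_path P a (pt (pt (pt a S h1) d k) S h2).
Proof.
move=> hd H1 H2 H3; exists h1, k, h2, d; split => //.
split; last split.
- rewrite walk_nseq walk_nseq walk_nseq0 !all_cat !all_map /=.
  rewrite all_iota; last by move=> i hi; apply: H1; lia.
  rewrite all_iota; last by move=> i hi; apply: H2; lia.
  rewrite all_iota; last by move=> i hi; apply: H3; lia.
  by rewrite H3.
- apply: (@sorted_uniq _ (rel_d d)).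
  + case: hd => -> v u w; rewrite /rel_d /=;
    move=> /orP[h|/andP[/eqP e h]] /orP[h'|/andP[/eqP e' h']]; apply/orP;
      try (by left; lia); right; apply/andP; split; try apply/eqP; lia.
  + by move=> u; rewrite /rel_d !ltxx eqxx.
  + apply: (@sorted_walk _ (Q_d d)).
      case: hd => -> c [] //= _; rewrite /rel_d /=; apply/orP; try (by left; lia);
      right; apply/andP; split; try apply/eqP; lia.
    by case: hd => ->; rewrite !all_cat !all_nseq /= !orbT.
- by rewrite last_walk !foldl_cat !foldl_nseq.
Qed.

Lemma nat_of_nonneg (z : int) : 0 <= z -> exists n : nat, z = n%:Z.
Proof. case: z => n // _; by exists n. Qed.

Lemma forward (P : seq cell) (a b : cell) : convex_poly P -> centered P -> a \in P -> b \in P ->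
  b.2 <= a.2 -> SDS_path P a b.
Proof.
move=> [hrow hcol] [y0 [x1 [x2 [hx1 [hx2 hall]]]]] aP bP hab.
have row0 (x : int) : x1 <= x <= x2 -> (x, y0) \in P by exact: hrow.
have col (c : cell) (y : int) : c \in P -> (y0 <= y <= c.2) || (c.2 <= y <= y0) -> (c.1, y) \in P.
  case: c => cx cy /= cP; have := hall _ cP => /= hc.
  have c0 := row0 _ hc.
  by case/orP => hy; [apply: (hcol cx y0 cy) | apply: (hcol cx cy y0)].
have [ym [hym [hy1 hy2]]] : exists ym : int, b.2 <= ym <= a.2 /\
   (forall y, ym <= y <= a.2 -> (y0 <= y <= a.2) || (a.2 <= y <= y0)) /\
   (forall y, b.2 <= y <= ym -> (y0 <= y <= b.2) || (b.2 <= y <= y0)).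
  have [h|h] := boolP (y0 < b.2).
    by exists b.2; split; [lia | split => y hy; lia].
  have [h'|h'] := boolP (y0 <= a.2).
    by exists y0; split; [lia | split => y hy; lia].
  by exists a.2; split; [lia | split => y hy; lia].
have [h1 eh1] := @nat_of_nonneg (a.2 - ym) ltac:(lia).
have [h2 eh2] := @nat_of_nonneg (ym - b.2) ltac:(lia).
have [d [k [hd [hk1 [hk2 hk3]]]]] : exists d k, (d = E \/ d = W) /\
   (forall i, (i <= k)%N -> (a.1 <= a.1 + i%:Z * (step_vec d).1 <= b.1) ||
                            (b.1 <= a.1 + i%:Z * (step_vec d).1 <= a.1)) /\
   a.1 + k%:Z * (step_vec d).1 = b.1 /\ (step_vec d).2 = 0.
  have [h|h] := boolP (a.1 <= b.1).
    have [k ek] := @nat_of_nonneg (b.1 - a.1) ltac:(lia).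
    by exists E, k; split; [by left | split; [move=> i hi /=; lia | split => /=; lia]].
  have [k ek] := @nat_of_nonneg (a.1 - b.1) ltac:(lia).
  by exists W, k; split; [by right | split; [move=> i hi /=; lia | split => /=; lia]].
have amid : (a.1, ym) \in P by apply: col => //; apply: hy1; lia.
have bmid : (b.1, ym) \in P by apply: col => //; apply: hy2; lia.
have -> : b = pt (pt (pt a S h1) d k) S h2.
  case: b bP hab hym hy2 hk1 hk2 eh2 bmid => bx by_ /= *.
  rewrite /pt /= hk3; congr pair; lia.
apply: build => // i hi.
- have -> : pt a S i = (a.1, a.2 - i%:Z) by rewrite /pt /=; congr pair; lia.
  apply: col => //; apply: hy1; lia.
- have -> : pt (pt a S h1) d i = (a.1 + i%:Z * (step_vec d).1, ym).
    by rewrite /pt /= hk3; congr pair; lia.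
  have := hk1 _ hi; move: (a.1 + _) => x hx.
  by case/orP: hx => hx; [apply: (hrow ym a.1 b.1) | apply: (hrow ym b.1 a.1)].
- have -> : pt (pt (pt a S h1) d k) S i = (b.1, ym - i%:Z).
    by rewrite /pt /= hk3; congr pair; lia.
  have -> : b.1 = (b.1, b.2).1 by [].
  apply: col; first by case: (b) bP.
  apply: hy2 => /=; lia.
Qed.

Lemma sds_row (P : seq cell) (u v : cell) :
  SDS_path P u v -> exists y : int, (u.1, y) \in P /\ (v.1, y) \in P.
Proof.
case=> h1 [k [h2 [d [hd [hall [_ hlast]]]]]].
have u1P : foldl move u (nseq h1 S) \in P.
  by apply: (allP hall); apply: prefix_in_walk.
have u2P : foldl move u (nseq h1 S ++ nseq k d) \in P.
  by apply: (allP hall); rewrite catA; apply: prefix_in_walk.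
rewrite last_walk !foldl_cat !foldl_nseq in hlast.
rewrite !foldl_nseq in u1P; rewrite foldl_cat !foldl_nseq in u2P.
exists (pt u S h1).2; split.
  have -> : (u.1, (pt u S h1).2) = pt u S h1 by rewrite /pt /=; congr pair; lia.
  done.
rewrite -hlast.
have -> : ((pt (pt (pt u S h1) d k) S h2).1, (pt u S h1).2) = pt (pt u S h1) d k.
  by case: hd => ->; rewrite /pt /=; congr pair; lia.
done.
Qed.

Lemma ex_min (f : cell -> int) (P : seq cell) : P != [::] ->
  exists2 l, l \in P & forall c, c \in P -> f l <= f c.
Proof.
elim: P => [//|c P IH] _.
case: P IH => [|c' P'] IH.
  by exists c; [rewrite mem_head | move=> x; rewrite inE => /eqP ->].
have [l lP hl] := IH isT.
have [h|h] := boolP (f c <= f l).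
  exists c; first by rewrite mem_head.
  move=> x; rewrite inE => /orP[/eqP ->//|xP].
  exact: le_trans h (hl _ xP).
exists l; first by rewrite inE lP orbT.
move=> x; rewrite inE => /orP[/eqP ->|xP]; last exact: hl.
by rewrite le_eqVlt ltNge h orbT.
Qed.

Theorem mainTheorem2 (P : seq cell) :
  polyomino P -> convex_poly P ->
  (centered P <->
   forall a b, a \in P -> b \in P -> SDS_path P a b \/ SDS_path P b a).
Proof.
move=> [hne _] hconv; split.
  move=> hc a b aP bP.
  have [h|h] := boolP (b.2 <= a.2); first by left; exact: forward.
  by right; apply: forward => //; rewrite -ltNge in h; exact: ltW.
move=> H.
have [l lP hl] := @ex_min (fun c => c.1) P hne.
have [r rP hr] := @ex_min (fun c => - c.1) P hne.
have hb : forall c : cell, c \in P -> l.1 <= c.1 <= r.1.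
  by move=> c cP; move: (hl c cP) (hr c cP) => /= ha hb; lia.
case: (H l r lP rP) => /sds_row [y [h1 h2]].
  by exists y, l.1, r.1.
by exists y, l.1, r.1.
Qed.
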